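(* Every topological pseudovector (Abelian) group which is metrizable as a topological space admits a subnorm inducing its topology.
   Context: A pseudovector group is a triple $(G,+,* )$ where $(G,+)$ is an Abelian group and $*\colon[0,\infty)\times G\to G$ is an action with $0*x=0$, $1*x=x$, $(st)*x=s*(t*x)$ for all $s,t\geqslant0$, $x\in G$, and $x\mapsto t*x$ a group homomorphism for each $t\geqslant0$. A topological pseudovector group is such a $G$ with a topology making $(G,+)$ a topological group and $*$ continuous. A value on $G$ is $p\colon G\to[0,\infty)$ with $p(x)=0\iff x=0$, $p(-x)=p(x)$, $p(x+y)\leqslant p(x)+p(y)$; it induces the metric $p(x-y)$. A subnorm is a value $\|\cdot\|$ with $\|t*x\|\leqslant\max(t,1)\|x\|$ for all $t\geqslant0$, $x\in G$. *)

(* Defs.v *)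
From HB Require Import structures.
From mathcomp Require Import all_boot all_order all_algebra.
From mathcomp Require Import all_classical all_reals all_analysis.
Set Implicit Arguments. Unset Strict Implicit. Unset Printing Implicit Defensive.
Import Order.TTheory GRing.Theory Num.Theory.
Import numFieldNormedType.Exports.
Local Open Scope classical_set_scope.
Local Open Scope ring_scope.

(* The action  * : [0,oo) x G -> G  is represented by a function
   act : R -> G -> G of which only the values at t >= 0 matter. *)
Definition pseudovector_action (R : realType) (G : zmodType)
    (act : R -> G -> G) : Prop :=
  [/\ forall x : G, act 0 x = 0,
      forall x : G, act 1 x = x,
      forall (s t : R) (x : G), 0 <= s -> 0 <= t -> act (s * t) x = act s (act t x)
    & forall t : R, 0 <= t -> forall x y : G, act t (x + y) = act t x + act t y].

Definition topological_pseudovector_action (R : realType)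
    (G : topologicalZmodType) (act : R -> G -> G) : Prop :=
  pseudovector_action act /\
  {within [set p : R * G | 0 <= p.1], continuous (fun p : R * G => act p.1 p.2)}.

Definition metric_open (R : realType) (T : Type) (d : T -> T -> R) (A : set T) :=
  forall x, A x -> exists e : R, 0 < e /\ [set y | d x y < e] `<=` A.

Definition is_metric (R : realType) (T : Type) (d : T -> T -> R) : Prop :=
  [/\ forall x y, d x y = 0 <-> x = y,
      forall x y, d x y = d y x
    & forall x y z, d x z <= d x y + d y z].

Definition induces_topology (R : realType) (T : topologicalType)
    (d : T -> T -> R) : Prop :=
  forall A : set T, open A <-> metric_open d A.

Definition metrizable (R : realType) (T : topologicalType) : Prop :=
  exists d : T -> T -> R, is_metric d /\ induces_topology d.

Definition is_value (R : realType) (G : zmodType) (p : G -> R) : Prop :=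
  [/\ forall x, 0 <= p x,
      forall x, p x = 0 <-> x = 0,
      forall x, p (- x) = p x
    & forall x y, p (x + y) <= p x + p y].

Definition is_subnorm (R : realType) (G : zmodType) (act : R -> G -> G)
    (p : G -> R) : Prop :=
  is_value p /\ forall (t : R) (x : G), 0 <= t -> p (act t x) <= Num.max t 1 * p x.

Definition value_metric (R : realType) (G : zmodType) (p : G -> R) : G -> G -> R :=
  fun x y => p (x - y).

(* Main.v *)
Require Import Defs.
From HB Require Import structures.
From mathcomp Require Import all_boot all_order all_algebra.
From mathcomp Require Import all_classical all_reals all_analysis.
Import Order.TTheory GRing.Theory Num.Theory.
Import numFieldNormedType.Exports.
Local Open Scope classical_set_scope.
Local Open Scope ring_scope.
From mathcomp Require Import ring lra zify.
Set Implicit Arguments. Unset Strict Implicit. Unset Printing Implicit Defensive.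

Lemma sub_cont_at (G : topologicalZmodType) (x y : G) :
  (fun z : G => x - z) @ y --> x - y.
Proof.
apply: (@continuous_comp _ _ _ (fun z => (x, z)) (fun p : G * G => p.1 - p.2)).
  by apply: cvg_pair => /=; [exact: cvg_cst|exact: cvg_id].
exact: sub_continuous.
Qed.

Lemma nbhs_transl (G : topologicalZmodType) (x : G) (A : set G) :
  nbhs x A <-> nbhs 0 [set y | A (x - y)].
Proof.
split => H.
  have h := @sub_cont_at G x 0; rewrite subr0 in h.
  exact: (h _ H).
have h := @sub_cont_at G x x; rewrite subrr in h.
apply: (@filterS _ (nbhs x) _ _ _ _ (h _ H)) => z /=; rewrite opprB addrC subrK; exact.
Qed.

Lemma add_half (G : topologicalZmodType) (V : set G) : nbhs 0 V ->
  exists W : set G, nbhs 0 W /\ forall a b, W a -> W b -> V (a + b).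
Proof.
move=> V0.
have h := @add_continuous G (0, 0). simpl in h.
have := h V; rewrite addr0 => /(_ V0).
move=> [[Q1 Q2] /= [Q1n Q2n] sub].
exists (Q1 `&` Q2); split; first exact: filterI.
move=> a b [Qa _] [_ Qb]; exact: (sub (a, b)).
Qed.

Lemma shrink_ex (G : topologicalZmodType) (V : set G) : nbhs 0 V ->
  exists W : set G, [/\ nbhs 0 W, (forall x, W x -> W (- x)) &
    (forall a b c, W a -> W b -> W c -> V (a + b + c))].
Proof.
move=> /add_half [W1 [W1n W1V]].
have [W2 [W2n W2W]] := add_half W1n.
have W2N : nbhs 0 [set x | W2 (- x)].
  have h := @opp_continuous G 0.
  by have := h W2; rewrite oppr0 => /(_ W2n).
exists (W2 `&` [set x | W2 (- x)]); split.
- exact: filterI.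
- by move=> x [h1 h2]; split => //=; rewrite opprK.
- move=> a b c [Wa _] [Wb _] [Wc _]; apply: W1V; first exact: W2W.
  by rewrite -[c]addr0; apply: W2W => //; exact: nbhs_singleton.
Qed.

Lemma nbhs_metric (R : realType) (T : topologicalType) (d : T -> T -> R) :
  is_metric d -> induces_topology d -> forall (x : T) (A : set T),
  nbhs x A <-> exists e : R, 0 < e /\ [set y | d x y < e] `<=` A.
Proof.
move=> [d0 dC dT] dI x A; split.
  rewrite nbhsE => -[B [oB Bx] BA].
  have [e [e0 eB]] := (proj1 (dI B) oB x Bx).
  by exists e; split => // y /eB /BA.
move=> [e [e0 eA]].
have ob : open [set y | d x y < e].
  apply/dI => y /= dy; exists (e - d x y); split; first by rewrite subr_gt0.
  move=> z /= dz; apply: (le_lt_trans (dT x y z)).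
  by rewrite -ltrBrDl.
rewrite openE in ob.
have : nbhs x [set y | d x y < e] by apply: ob => /=; rewrite (proj2 (d0 x x)).
exact: (@filterS _ (nbhs x) _ _ _ eA).
Qed.

Definition small_base (R : realType) (G : topologicalZmodType) (p : G -> R) :=
  (forall V : set G, nbhs 0 V -> exists e : R, 0 < e /\ forall y, p y < e -> V y) /\
  (forall e : R, 0 < e -> nbhs 0 [set y | p y < e]).

Lemma induces_of_small (R : realType) (G : topologicalZmodType) (p : G -> R) :
  small_base p -> induces_topology (value_metric p).
Proof.
move=> [P1 P2] A; split.
  rewrite openE => oA x Ax.
  have := oA x Ax; rewrite /interior => /nbhs_transl /P1 [e [e0 eA]].
  exists e; split => // z /= dz.
  by have := eA _ dz; rewrite /= opprB addrC subrK.
move=> mA; rewrite openE => x Ax; rewrite /interior; apply/nbhs_transl.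
have [e [e0 eA]] := mA x Ax.
apply: (@filterS _ (nbhs 0) _ _ _ _ (P2 e e0)) => y /= py.
apply: eA; rewrite /value_metric /= opprB addrC subrK //.
Qed.

Definition wpow (R : realType) (n : nat) : R := (2^-1) ^+ n.

Lemma wpow_gt0 (R : realType) n : 0 < wpow R n.
Proof. by rewrite /wpow exprn_gt0 // invr_gt0. Qed.

Lemma wpowS (R : realType) n : wpow R n.+1 = wpow R n / 2.
Proof. by rewrite /wpow exprSr. Qed.




Lemma half_bounds (R : realType) : 0 < (2:R)^-1 /\ (2:R)^-1 < 1.
Proof. split; lra. Qed.

Lemma wpow_lt (R : realType) m n : (m < n)%N -> wpow R n < wpow R m.
Proof. by move=> mn; rewrite /wpow ltr_iXn2l //; case: (half_bounds R). Qed.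

Lemma wpow_le (R : realType) m n : (m <= n)%N -> wpow R n <= wpow R m.
Proof. by move=> mn; rewrite /wpow ler_iXn2l //; case: (half_bounds R). Qed.

Lemma wpow_le1 (R : realType) n : wpow R n <= 1.
Proof. by have := @wpow_le R 0 n isT; rewrite /wpow expr0. Qed.

Section Chains.
End Chains.

Fixpoint chok (G : zmodType) (U : nat -> set G) (s : seq (nat * G)) : Prop :=
  if s is a :: s' then U a.1 a.2 /\ chok U s' else True.
Fixpoint wt (R : realType) (G : zmodType) (s : seq (nat * G)) : R :=
  if s is a :: s' then wpow R a.1 + wt R s' else 0.
Fixpoint csum (G : zmodType) (s : seq (nat * G)) : G :=
  if s is a :: s' then a.2 + csum s' else 0.

Lemma wt_ge0 (R : realType) (G : zmodType) (s : seq (nat * G)) : 0 <= wt R s.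
Proof. elim: s => //= a s IH; apply: addr_ge0 => //; exact/ltW/wpow_gt0. Qed.

Lemma wt_cat (R : realType) (G : zmodType) (s t : seq (nat * G)) :
  wt R (s ++ t) = wt R s + wt R t.
Proof. by elim: s => [|a s IH] /=; rewrite ?add0r // IH addrA. Qed.

Lemma csum_cat (G : zmodType) (s t : seq (nat * G)) :
  csum (s ++ t) = csum s + csum t.
Proof. by elim: s => [|a s IH] /=; rewrite ?add0r // IH addrA. Qed.

Lemma chok_cat (G : zmodType) U (s t : seq (nat * G)) :
  chok U (s ++ t) <-> chok U s /\ chok U t.
Proof.
elim: s => [|a s IH] /=; first by split => // -[].
split; first by move=> [h1 /IH [h2 h3]].
by move=> [[h1 h2] h3]; split => //; apply/IH.
Qed.

Lemma wt_eq0 (R : realType) (G : zmodType) (s : seq (nat * G)) :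
  wt R s <= 0 -> s = [::].
Proof.
case: s => //= a s h; exfalso.
have := wpow_gt0 R a.1; have := wt_ge0 R s; lra.
Qed.

Lemma wt_gt0 (R : realType) (G : zmodType) (s : seq (nat * G)) :
  s != [::] -> 0 < wt R s.
Proof.
move=> sn; rewrite lt_def wt_ge0 andbT; apply/negP => /eqP h.
by move: sn; rewrite (@wt_eq0 R G s) ?h.
Qed.

Lemma split_weight (R : realType) (G : zmodType) (s : seq (nat * G)) (h : R) :
  0 <= h -> h < wt R s -> exists s1 a s2,
  [/\ s = s1 ++ a :: s2, wt R s1 <= h & h < wt R s1 + wpow R a.1].
Proof.
elim: s h => [|a s IH] h h0 /=; first by lra.
move=> hlt.
have [ah|ha] := ltP h (wpow R a.1).
  by exists [::], a, s; split => //=; rewrite add0r.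
have [||s1 [b [s2 [-> h1 h2]]]] := IH (h - wpow R a.1); first by lra.
  by lra.
exists (a :: s1), b, s2; split => //=; lra.
Qed.

Lemma chain_key (R : realType) (G : zmodType) (U : nat -> set G) :
  (forall n, U n 0) ->
  (forall n a b c, U n.+1 a -> U n.+1 b -> U n.+1 c -> U n (a + b + c)) ->
  forall k (s : seq (nat * G)) n, (size s <= k)%N -> chok U s ->
  wt R s <= wpow R n -> U n (csum s).
Proof.
move=> U0 U3.
have Udec : forall n x, U n.+1 x -> U n x.
  by move=> n x ux; rewrite -[x]addr0 -[x + 0]addr0; apply: U3.
have Umono : forall m n x, (m <= n)%N -> U n x -> U m x.
  move=> m n x /subnK <-; elim: (n - m)%N => // i IH.
  by rewrite addSn => /Udec.
elim=> [|k IH] s n.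
  by rewrite leqn0 => /nilP -> /=.
case: (eqVneq s [::]) => [-> //|sn] ssz sok swt.
have wpos := wt_gt0 R sn.
have [||s1 [a [s2 [sdef h1 h2]]]] := @split_weight R G s (wt R s / 2).
- lra.
- lra.
move: sok swt ssz; rewrite sdef chok_cat wt_cat csum_cat size_cat /=.
move=> [ok1 [oka ok2]] swt ssz.
move: wpos h1 h2; rewrite sdef wt_cat /= => wpos h1 h2.
have sz1 : (size s1 <= k)%N by lia.
have sz2 : (size s2 <= k)%N by lia.
have w1 := wt_ge0 R s1; have w2 := wt_ge0 R s2.
have [na|an] := ltnP n a.1.
  have wn := wpowS R n.
  have u1 : U n.+1 (csum s1) by apply: IH => //; lra.
  have u2 : U n.+1 (csum s2) by apply: IH => //; lra.
  have ua : U n.+1 a.2 by apply: (Umono _ a.1).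
  by rewrite addrA; apply: U3.
have [an'|na'] := ltnP a.1 n.
  have := wpow_lt R an'; lra.
have ean : a.1 = n by apply/eqP; rewrite eqn_leq an na'.
have e1 : s1 = [::] by apply: (@wt_eq0 R); rewrite -ean in swt; lra.
have e2 : s2 = [::] by apply: (@wt_eq0 R); rewrite -ean in swt; lra.
by rewrite e1 e2 /= add0r addr0 -ean.
Qed.

Definition shrink (G : topologicalZmodType) (V : set G) : set G :=
  match pselect (nbhs 0 V) with
  | left h => projT1 (cid (shrink_ex h))
  | right _ => V end.

Lemma shrinkP (G : topologicalZmodType) (V : set G) : nbhs 0 V ->
  [/\ nbhs 0 (shrink V), (forall x, shrink V x -> shrink V (- x)) &
    (forall a b c, shrink V a -> shrink V b -> shrink V c -> V (a + b + c))].
Proof.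
move=> hV; rewrite /shrink; case: pselect => // h.
by case: cid => W /=.
Qed.

Fixpoint Useq (R : realType) (G : topologicalZmodType) (d : G -> G -> R) n : set G :=
  if n is n'.+1 then shrink (Useq d n' `&` [set y | d 0 y < n'.+1%:R^-1])
  else setT.

Lemma Useq_props (R : realType) (G : topologicalZmodType) (d : G -> G -> R) :
  is_metric d -> induces_topology d -> forall n,
  [/\ nbhs 0 (Useq d n), (forall x, Useq d n x -> Useq d n (- x)),
    (forall a b c, Useq d n.+1 a -> Useq d n.+1 b -> Useq d n.+1 c ->
       Useq d n (a + b + c)) &
    (forall x, Useq d n.+1 x -> d 0 x < n.+1%:R^-1)].
Proof.
move=> dm dI.
have ball0 : forall n, nbhs 0 [set y | d 0 y < n.+1%:R^-1].
  move=> n; apply/(nbhs_metric dm dI); exists n.+1%:R^-1; split => //.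
have Un : forall n, nbhs 0 (Useq d n).
  elim=> [|n IH] /=; first exact: filterT.
  by case: (shrinkP (filterI IH (ball0 n))).
move=> n; split => //.
- by case: n => [|n] //=; case: (shrinkP (filterI (Un n) (ball0 n))).
- move=> a b c /=; case: (shrinkP (filterI (Un n) (ball0 n))) => _ _ h ha hb hc.
  by case: (h _ _ _ ha hb hc).
- move=> x /= hx; case: (shrinkP (filterI (Un n) (ball0 n))) => _ _ h.
  have := h x 0 0 hx; rewrite !addr0; case.
  + by have [/nbhs_singleton] := shrinkP (filterI (Un n) (ball0 n)).
  + by have [/nbhs_singleton] := shrinkP (filterI (Un n) (ball0 n)).
  + by [].
Qed.

Definition chset (R : realType) (G : zmodType) (U : nat -> set G) (x : G) : set R :=
  [set r | exists s, [/\ chok U s, csum s = x & r = wt R s]].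
Arguments chset R {G} U x.
Definition rho (R : realType) (G : zmodType) (U : nat -> set G) (x : G) : R :=
  inf (@chset R G U x).
Arguments rho R {G} U x.

Lemma chset_ne (R : realType) (G : zmodType) (U : nat -> set G) x :
  (forall y, U 0%N y) -> chset R U x !=set0.
Proof.
move=> U0; exists (wt R [:: (0%N, x)]), [:: (0%N, x)]; split => //=.
by rewrite addr0.
Qed.

Lemma chset_lb (R : realType) (G : zmodType) (U : nat -> set G) x :
  lbound (chset R U x) 0.
Proof. by move=> r [s [_ _ ->]]; exact: wt_ge0. Qed.

Lemma rho_le (R : realType) (G : zmodType) (U : nat -> set G) s :
  chok U s -> rho R U (csum s) <= wt R s.
Proof.
move=> ok; apply: ge_inf; first by exists 0; exact: chset_lb.
by exists s.
Qed.

Lemma rho_ge0 (R : realType) (G : zmodType) (U : nat -> set G) x :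
  (forall y, U 0%N y) -> 0 <= rho R U x.
Proof. by move=> U0; apply: lb_le_inf; [exact: chset_ne|exact: chset_lb]. Qed.

Lemma rho_lt (R : realType) (G : zmodType) (U : nat -> set G) x r :
  (forall y, U 0%N y) -> rho R U x < r ->
  exists s, [/\ chok U s, csum s = x & wt R s < r].
Proof.
move=> U0 /(inf_lt (chset_ne R x U0)) [y [s [ok cs ->]] lt].
by exists s.
Qed.

Lemma rho_le1 (R : realType) (G : zmodType) (U : nat -> set G) x :
  (forall y, U 0%N y) -> rho R U x <= 1.
Proof.
move=> U0; have := @rho_le R G U [:: (0%N, x)].
by rewrite /= addr0 /wpow expr0 addr0; apply.
Qed.

Lemma rho_add (R : realType) (G : zmodType) (U : nat -> set G) x y :
  (forall y, U 0%N y) -> rho R U (x + y) <= rho R U x + rho R U y.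
Proof.
move=> U0.
have H : forall s t, chok U s -> chok U t -> csum s = x -> csum t = y ->
    rho R U (x + y) <= wt R s + wt R t.
  move=> s t os ot <- <-; rewrite -csum_cat -wt_cat; apply: rho_le.
  exact/chok_cat.
have H2 : forall t, chok U t -> csum t = y -> rho R U (x + y) - wt R t <= rho R U x.
  move=> t ot ct; apply: lb_le_inf; first exact: chset_ne.
  by move=> r [s [os cs ->]]; rewrite lerBlDr; apply: H.
suff: rho R U (x + y) - rho R U x <= rho R U y by lra.
apply: lb_le_inf; first exact: chset_ne.
by move=> r [t [ot ct ->]]; have := H2 t ot ct; lra.
Qed.

Definition negch (G : zmodType) (s : seq (nat * G)) := map (fun a => (a.1, - a.2)) s.

Lemma rho_oppW (R : realType) (G : zmodType) (U : nat -> set G) x :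
  (forall y, U 0%N y) -> (forall n z, U n z -> U n (- z)) ->
  rho R U (- x) <= rho R U x.
Proof.
move=> U0 Us; apply: lb_le_inf; first exact: chset_ne.
move=> r [s [os <- ->]].
have -> : - csum s = csum (negch s).
  by elim: s {os} => [|a s IH] /=; rewrite ?oppr0 // opprD IH.
have -> : wt R s = wt R (negch s) by elim: s {os} => [|a s IH] //=; rewrite IH.
apply: rho_le; elim: s os => [|a s IH] //= [h1 h2]; split; [exact: Us|exact: IH].
Qed.

Lemma wpow_small (R : realType) n : wpow R n <= n.+1%:R^-1.
Proof.
have h : n.+1%:R * wpow R n <= 1.
  elim: n => [|n IH]; first by rewrite /wpow expr0 mulr1.
  rewrite wpowS -natr1.
  have := wpow_le1 R n; have := wpow_gt0 R n; move: IH; rewrite -natr1; nra.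
have p : 0 < n.+1%:R :> R by rewrite ltr0n.
rewrite -[wpow R n](mulKf (lt0r_neq0 p)) -[X in _ <= X]mulr1.
by apply: ler_wpM2l => //; rewrite invr_ge0 ltW.
Qed.

Lemma arch_inv (R : realType) (e : R) : 0 < e -> exists n, n.+1%:R^-1 < e.
Proof. by move=> /ltr_add_invr [k]; rewrite add0r; exists k. Qed.

Lemma BK (R : realType) (G : topologicalZmodType) : metrizable R G ->
  exists q : G -> R, [/\ is_value q, (forall x, q x <= 1) & small_base q].
Proof.
move=> [d [dm dI]].
have UP := Useq_props dm dI.
have U0 : forall y, Useq d 0 y by move=> y; exact: I.
have Us : forall n z, Useq d n z -> Useq d n (- z) by move=> n z; case: (UP n) => _ h _ _; exact: h.
have Uz : forall n, Useq d n 0 by move=> n; case: (UP n) => /nbhs_singleton.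
have U3 : forall n a b c, Useq d n.+1 a -> Useq d n.+1 b -> Useq d n.+1 c ->
    Useq d n (a + b + c) by move=> n; case: (UP n) => _ _ h _; exact: h.
have key := @chain_key R G (Useq d) Uz U3.
have Usmall : forall n y, rho R (Useq d) y < wpow R n -> Useq d n y.
  move=> n y /(rho_lt U0) [s [ok <- ws]].
  by apply: (key (size s)) => //; exact: ltW.
have Uball : forall n y, Useq d n.+1 y -> d 0 y < n.+1%:R^-1.
  by move=> n; case: (UP n) => _ _ _ h; exact: h.
have Uup : forall n y, Useq d n y -> rho R (Useq d) y <= wpow R n.
  move=> n y uy; have := @rho_le R G (Useq d) [:: (n, y)].
  by rewrite /= !addr0; apply.
case: dm => [d0 dC dT].
have dge0 : forall x y, 0 <= d x y.
  move=> x y; have := dT x y x; rewrite (proj2 (d0 x x)) // dC; lra.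
exists (rho R (Useq d)); split.
- split.
  + by move=> x; exact: rho_ge0.
  + move=> x; split; last first.
      move=> ->; apply/le_anti; rewrite rho_ge0 // andbT.
      exact: (@rho_le R G (Useq d) [::]).
    move=> rx; apply/esym/(proj1 (d0 0 x)).
    apply/le_anti; rewrite dge0 andbT; rewrite leNgt; apply/negP => dpos.
    have [n hn] := arch_inv dpos.
    have : Useq d n.+1 x by apply: Usmall; rewrite rx; exact: wpow_gt0.
    by move=> /Uball h; have := lt_trans h hn; rewrite ltxx.
  + move=> x; apply/le_anti/andP; split; first exact: rho_oppW.
    by rewrite -{1}[x]opprK; exact: rho_oppW.
  + by move=> x y; exact: rho_add.
- by move=> x; exact: rho_le1.
- split.
  + move=> V /(nbhs_metric (And3 d0 dC dT) dI) [e [e0 eV]].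
    have [n hn] := arch_inv e0.
    exists (wpow R n.+1); split; first exact: wpow_gt0.
    move=> y /Usmall /Uball dy; apply: eV => /=; exact: lt_trans dy hn.
  + move=> e e0; have [n hn] := arch_inv e0.
    have [Un _ _ _] := UP n.
    apply: (@filterS _ (nbhs 0) _ _ _ _ Un) => y /Uup h /=.
    exact: (le_lt_trans h (le_lt_trans (wpow_small R n) hn)).
Qed.

Lemma mx_ge1 (R : realType) (t : R) : 1 <= Num.max t 1.
Proof. by rewrite le_max lexx orbT. Qed.

Lemma mx_ge (R : realType) (t : R) : t <= Num.max t 1.
Proof. by rewrite le_max lexx. Qed.

Lemma mx_mul (R : realType) (t s : R) : 0 <= t -> 0 <= s ->
  Num.max (t * s) 1 <= Num.max t 1 * Num.max s 1.
Proof.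
move=> t0 s0; have := mx_ge1 t; have := mx_ge1 s; have := mx_ge t; have := mx_ge s.
rewrite ge_max; move=> h1 h2 h3 h4; apply/andP; split; nra.
Qed.

Lemma div_helper (R : realType) (a M N K P : R) : 0 <= a -> 1 <= M -> 1 <= N ->
  1 <= K -> K <= M * N -> a / K <= P -> a / M <= N * P.
Proof.
move=> a0 M1 N1 K1 KMN; rewrite !ler_pdivrMr; try lra.
nra.
Qed.

Lemma act0 (R : realType) (G : zmodType) (act : R -> G -> G) t :
  pseudovector_action act -> 0 <= t -> act t 0 = 0.
Proof.
move=> [_ _ _ hadd] t0; have := hadd t t0 0 0; rewrite addr0 => h.
by apply: (@addrI _ (act t 0)); rewrite addr0 -h.
Qed.

Lemma actN (R : realType) (G : zmodType) (act : R -> G -> G) t x :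
  pseudovector_action act -> 0 <= t -> act t (- x) = - act t x.
Proof.
move=> pa t0; have [_ _ _ hadd] := pa.
have := hadd t t0 x (- x); rewrite subrr (act0 pa t0) => /eqP.
by rewrite eq_sym addrC addr_eq0 => /eqP.
Qed.

Lemma value0 (R : realType) (G : zmodType) (q : G -> R) : is_value q -> q 0 = 0.
Proof. by move=> [_ h _ _]; apply/(proj2 (h 0)). Qed.

Definition sset (R : realType) (G : zmodType) (act : R -> G -> G) (q : G -> R) (x : G) :
  set R := [set r | exists t, 0 <= t /\ r = q (act t x) / Num.max t 1].
Definition pnorm (R : realType) (G : zmodType) (act : R -> G -> G) (q : G -> R) (x : G) :
  R := sup (sset act q x).

Lemma sset_ne (R : realType) (G : zmodType) (act : R -> G -> G) (q : G -> R) x :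
  sset act q x !=set0.
Proof. by exists (q (act 0 x) / Num.max 0 1), 0. Qed.

Lemma sset_ub (R : realType) (G : zmodType) (act : R -> G -> G) (q : G -> R) x :
  is_value q -> (forall y, q y <= 1) -> ubound (sset act q x) 1.
Proof.
move=> [q0 _ _ _] q1 r [t [t0 ->]].
have := mx_ge1 t; have := q1 (act t x); have := q0 (act t x).
move=> h1 h2 h3; rewrite ler_pdivrMr; lra.
Qed.

Lemma pn_ge (R : realType) (G : zmodType) (act : R -> G -> G) (q : G -> R) x t :
  is_value q -> (forall y, q y <= 1) -> 0 <= t ->
  q (act t x) / Num.max t 1 <= pnorm act q x.
Proof.
move=> qv q1 t0; apply: ub_le_sup; first by exists 1; exact: sset_ub.
by exists t.
Qed.

Lemma pn_le (R : realType) (G : zmodType) (act : R -> G -> G) (q : G -> R) x c :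
  (forall t, 0 <= t -> q (act t x) / Num.max t 1 <= c) -> pnorm act q x <= c.
Proof.
move=> h; apply: ge_sup; first exact: sset_ne.
by move=> r [t [t0 ->]]; apply: h.
Qed.

Lemma tube (R : realType) (G : topologicalZmodType) (act : R -> G -> G) (q : G -> R)
  (T e : R) : topological_pseudovector_action act -> small_base q -> 0 < e ->
  nbhs 0 [set y | forall t, 0 <= t <= T -> q (act t y) < e].
Proof.
move=> [pa ct] [_ Q2] e0.
have K := @segment_compact R 0 T.
rewrite compact_near_coveringP in K.
have H : forall t : R, `[0, T]%classic t -> \forall x' \near t & i \near (nbhs (0:G)),
    0 <= x' -> q (act x' i) < e.
  move=> t; rewrite set_itvcc /= => /andP [t0 _].
  have := (proj1 (subspace_continuousP _ _) ct (t, 0) t0).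
  move=> /(_ [set z | q z < e]).
  rewrite /from_subspace /= (act0 pa t0) => /(_ (Q2 e e0)) h.
  exact: h.
have := K G (nbhs 0) (fun y t => 0 <= t -> q (act t y) < e) (nbhs_filter 0) H.
apply: filterS => y hy t tT; apply: hy; last by case/andP: tT.
by rewrite set_itvcc.
Qed.

Lemma subnorm_of (R : realType) (G : topologicalZmodType) (act : R -> G -> G)
  (q : G -> R) : topological_pseudovector_action act -> is_value q ->
  (forall y, q y <= 1) -> small_base q ->
  is_subnorm act (pnorm act q) /\ small_base (pnorm act q).
Proof.
move=> tpa qv q1 qsb.
have [pa ct] := tpa.
have [a0 a1 amul aadd] := pa.
have [qge0 qz qN qadd] := qv.
have pq : forall x, q x <= pnorm act q x.
  move=> x; have := @pn_ge R G act q x 1 qv q1 ler01.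
  by rewrite a1 maxxx divr1.
have pge := fun x t => @pn_ge R G act q x t qv q1.
have divle : forall a m : R, 0 <= a -> 1 <= m -> a / m <= a.
  by move=> a m ha hm; rewrite ler_pdivrMr; nra.
split; first split.
- split.
  + by move=> x; exact: le_trans (qge0 x) (pq x).
  + move=> x; split.
      move=> px; apply/(proj1 (qz x))/le_anti; rewrite qge0 andbT -px; exact: pq.
    move=> ->; apply/le_anti; rewrite (le_trans (qge0 0) (pq 0)) andbT.
    apply: pn_le => t t0; rewrite (act0 pa t0) (value0 qv) mul0r //.
  + have h : forall x, pnorm act q (- x) <= pnorm act q x.
      move=> x; apply: pn_le => t t0; rewrite (actN _ pa t0) qN; exact: pge.
    by move=> x; apply/le_anti; rewrite h /= -{1}[x]opprK h.
  + move=> x y; apply: pn_le => t t0; rewrite aadd //.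
    have m1 := mx_ge1 t.
    apply: (le_trans (y := (q (act t x) + q (act t y)) / Num.max t 1)).
      by apply: ler_wpM2r; [rewrite invr_ge0; lra | exact: qadd].
    by rewrite mulrDl; apply: lerD; exact: pge.
- move=> s x s0; apply: pn_le => t t0.
  rewrite -amul //.
  apply: (div_helper (K := Num.max (t * s) 1)) => //.
  + exact: mx_ge1.
  + exact: mx_ge1.
  + exact: mx_ge1.
  + exact: mx_mul.
  + by apply: pge; exact: mulr_ge0.
- have [Q1 Q2] := qsb; split.
    move=> V /Q1 [e [e0 eV]]; exists e; split => // y py; apply: eV.
    exact: le_lt_trans (pq y) py.
  move=> e e0.
  have e20 : 0 < e / 2 by lra.
  have := @tube R G act q (2 / e) (e / 2) tpa qsb e20.
  apply: filterS => y hy /=.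
  apply: (le_lt_trans (y := e / 2)); last by lra.
  apply: pn_le => t t0.
  have m1 := mx_ge1 t; have mt := mx_ge t.
  have [tT|Tt] := leP t (2 / e).
    apply: le_trans (divle _ _ (qge0 _) m1) _; apply/ltW/hy.
    by rewrite t0.
  have eT : e / 2 * (2 / e) = 1 by field; lra.
  have := q1 (act t y); have := qge0 (act t y) => qa qb.
  rewrite ler_pdivrMr; last lra.
  nra.
Qed.

Unset Implicit Arguments.

Theorem proposition6p4 (R : realType) (G : topologicalZmodType)
    (act : R -> G -> G) :
  topological_pseudovector_action act ->
  metrizable R G ->
  exists p : G -> R, is_subnorm act p /\ induces_topology (value_metric p).
Proof.
move=> tpa mG.
have [q [qv q1 qsb]] := BK mG.
have [sn sb] := subnorm_of tpa qv q1 qsb.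
by exists (pnorm act q); split => //; exact: induces_of_small.
Qed.
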